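(* Let $n_x,n_v,N\ge 1$, $\Delta t,\Delta x,\Delta v,w>0$, velocities $v_1,\dots,v_{n_v}\in\mathbb{R}$, a matrix $\mathsf{C}\in\mathbb{R}^{n_x\times n_x}$, an initial state $\mathsf{f}^0\in\mathbb{R}^{n_x\times n_v}$ and a target $\mathsf{f}^{\mathrm{eq}}\in\mathbb{R}^{n_x\times n_v}$. All indices are periodic (modulo $n_x$ in the first, modulo $n_v$ in the second index). For $\mathsf{H}\in\mathbb{R}^{n_x}$ define the forward scheme, for $n=0,\dots,N-1$: (i) $\mathsf{f}^{n,\star}_{:,j}=S_{-v_j\Delta t/(2\Delta x)}\,\mathsf{f}^n_{:,j}$ for each $j$; (ii) $\mathsf{E}^{n,\star}=\mathsf{C}(\mathbf{1}-\rho^{n,\star})$ with $\rho^{n,\star}_i=w\sum_j\mathsf{f}^{n,\star}_{ij}$, and $\sigma^n_i=(\mathsf{E}^{n,\star}_i+\mathsf{H}_i)\Delta t/\Delta v$; (iii) $\mathsf{f}^{n,\star\star}_{i,:}=S_{\sigma^n_i}\,\mathsf{f}^{n,\star}_{i,:}$ for each $i$ (acting on the row viewed as a vector in $\mathbb{R}^{n_v}$); (iv) $\mathsf{f}^{n+1}_{:,j}=S_{-v_j\Delta t/(2\Delta x)}\,\mathsf{f}^{n,\star\star}_{:,j}$ for each $j$; and let $\mathsf{J}(\mathsf{H})=\frac{\Delta x\Delta v}{2}\sum_{i,j}|\mathsf{f}^N_{ij}-\mathsf{f}^{\mathrm{eq}}_{ij}|^2$. Define the adjoint recursion: $\mathsf{g}^N=\mathsf{f}^N-\mathsf{f}^{\mathrm{eq}}$,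 and for $n=N-1,\dots,0$: $\mathsf{g}^{n,\star\star}_{:,j}=S_{-v_j\Delta t/(2\Delta x)}^{\top}\mathsf{g}^{n+1}_{:,j}$; $D^n_{ij}=\frac{\Delta t}{\Delta v}\big(\mathsf{f}^{n,\star}_{i,j+\mathrm{n}(\sigma^n_i)+1}-\mathsf{f}^{n,\star}_{i,j+\mathrm{n}(\sigma^n_i)}\big)\mathsf{g}^{n,\star\star}_{ij}$, $d^n_i=\sum_j D^n_{ij}$; $\mathsf{g}^{n,\star}_{kl}=\big(S_{\sigma^n_k}^{\top}\mathsf{g}^{n,\star\star}_{k,:}\big)_l-w\,(\mathsf{C}^{\top}d^n)_k$; $\mathsf{g}^{n}_{:,j}=S_{-v_j\Delta t/(2\Delta x)}^{\top}\mathsf{g}^{n,\star}_{:,j}$. Then, at any $\mathsf{H}$ for which no $\sigma^n_i$ ($0\le n<N$, $1\le i\le n_x$) is an integer, $\mathsf{J}$ is differentiable and $$\frac{\partial\mathsf{J}}{\partial\mathsf{H}_i}=\Delta x\,\Delta v\sum_{n=0}^{N-1}d^n_i,\qquad i=1,\dots,n_x .$$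
   Context: For an integer $m\ge 2$ and $s\in\mathbb{R}$, write $\mathrm{n}(s)=\lfloor s\rfloor$, $\alpha(s)=s-\lfloor s\rfloor$, and let $S_s\in\mathbb{R}^{m\times m}$ be given by $(S_su)_k=(1-\alpha(s))u_{k+\mathrm{n}(s)}+\alpha(s)u_{k+\mathrm{n}(s)+1}$ with indices mod $m$ (here $m=n_x$ for the $x$-steps and $m=n_v$ for the $v$-step). The forward scheme is the Strang-split semi-Lagrangian discretization (half step in $x$, full step in $v$ with the self-consistent field plus external field $\mathsf{H}$, half step in $x$) of the 1D Vlasov–Poisson equation $\partial_tf+v\partial_xf-(H+E[f])\partial_vf=0$; $\mathsf{g}^n,\mathsf{g}^{n,\star},\mathsf{g}^{n,\star\star}$ are the discrete adjoint states (Lagrange multipliers). *)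

(* Defs.v *)
From HB Require Import structures.
From mathcomp Require Import all_boot all_order all_algebra.
From mathcomp Require Import all_classical all_reals all_analysis.
Set Implicit Arguments. Unset Strict Implicit. Unset Printing Implicit Defensive.
Import Order.TTheory GRing.Theory Num.Theory.
Import numFieldNormedType.Exports.
Local Open Scope ring_scope.

Section VP.
Variable R : realType.

Definition pidx (m : nat) (k : 'I_m) (z : int) : 'I_m :=
  insubd k (absz ((k%:Z + z) %% m%:Z)%Z).

Definition nfl (s : R) : int := Num.floor s.
Definition alph (s : R) : R := s - (nfl s)%:~R.

(* the interpolation matrix S_s : (S_s u)_k = (1-a) u_{k+n} + a u_{k+n+1} *)
Definition Smx (m : nat) (s : R) : 'M[R]_m :=
  \matrix_(k, l) ((1 - alph s) * (l == pidx k (nfl s))%:R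
                  + alph s * (l == pidx k (nfl s + 1))%:R).

Variables (nx nv : nat) (dt dx dv w : R) (v : 'I_nv -> R) (C : 'M[R]_nx).

Definition xshift (j : 'I_nv) : R := - v j * dt / (2 * dx).

Definition xstep (f : 'M[R]_(nx, nv)) : 'M[R]_(nx, nv) :=
  \matrix_(i, j) (Smx nx (xshift j) *m col j f) i 0.

Definition xstepT (g : 'M[R]_(nx, nv)) : 'M[R]_(nx, nv) :=
  \matrix_(i, j) ((Smx nx (xshift j))^T *m col j g) i 0.

Definition rho (fs : 'M[R]_(nx, nv)) : 'cV[R]_nx :=
  \col_i (w * \sum_j fs i j).

Definition Efield (fs : 'M[R]_(nx, nv)) : 'cV[R]_nx :=
  C *m (const_mx 1 - rho fs).

Definition sigma (H : 'cV[R]_nx) (fs : 'M[R]_(nx, nv)) (i : 'I_nx) : R :=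
  (Efield fs i 0 + H i 0) * dt / dv.

Definition vstep (H : 'cV[R]_nx) (fs : 'M[R]_(nx, nv)) : 'M[R]_(nx, nv) :=
  \matrix_(i, j) (Smx nv (sigma H fs i) *m (row i fs)^T) j 0.

Definition fstep (H : 'cV[R]_nx) (f : 'M[R]_(nx, nv)) : 'M[R]_(nx, nv) :=
  xstep (vstep H (xstep f)).

Variables (N : nat) (f0 feq : 'M[R]_(nx, nv)).

Definition fn (H : 'cV[R]_nx) (n : nat) : 'M[R]_(nx, nv) := iter n (fstep H) f0.
Definition fstar (H : 'cV[R]_nx) (n : nat) : 'M[R]_(nx, nv) := xstep (fn H n).
Definition sig (H : 'cV[R]_nx) (n : nat) (i : 'I_nx) : R := sigma H (fstar H n) i.

Definition Jcost (H : 'cV[R]_nx) : R :=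
  dx * dv / 2 * \sum_i \sum_j (fn H N i j - feq i j) ^+ 2.

Definition Dmat (H : 'cV[R]_nx) (n : nat) (g1 : 'M[R]_(nx, nv)) : 'M[R]_(nx, nv) :=
  let gss := xstepT g1 in
  \matrix_(i, j) (dt / dv *
     (fstar H n i (pidx j (nfl (sig H n i) + 1)) - fstar H n i (pidx j (nfl (sig H n i))))
     * gss i j).

Definition dvec (H : 'cV[R]_nx) (n : nat) (g1 : 'M[R]_(nx, nv)) : 'cV[R]_nx :=
  \col_i \sum_j Dmat H n g1 i j.

Definition gstep (H : 'cV[R]_nx) (n : nat) (g1 : 'M[R]_(nx, nv)) : 'M[R]_(nx, nv) :=
  let gss := xstepT g1 in
  let gs := \matrix_(k, l) (((Smx nv (sig H n k))^T *m (row k gss)^T) l 0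
                             - w * (C^T *m dvec H n g1) k 0) in
  xstepT gs.

(* grec m = g^{N-m} *)
Fixpoint grec (H : 'cV[R]_nx) (m : nat) : 'M[R]_(nx, nv) :=
  match m with
  | 0 => fn H N - feq
  | m'.+1 => gstep H (N - m'.+1) (grec H m')
  end.

Definition gadj (H : 'cV[R]_nx) (n : nat) : 'M[R]_(nx, nv) := grec H (N - n).

Definition dn (H : 'cV[R]_nx) (n : nat) : 'cV[R]_nx := dvec H n (gadj H n.+1).

End VP.

(* Main.v *)
Require Import Defs.
From HB Require Import structures.
From mathcomp Require Import all_boot all_order all_algebra.
From mathcomp Require Import all_classical all_reals all_analysis.
Import Order.TTheory GRing.Theory Num.Theory.
Import numFieldNormedType.Exports.
Local Open Scope ring_scope.
From mathcomp Require Import ring zify.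

Section Gen.
Context {R : realType} {V : normedModType R}.

Lemma near_eq_differentiable (f g : V -> R) (x : V) :
  (\forall y \near x, f y = g y) -> differentiable f x -> differentiable g x.
Proof.
move=> fg df.
have fgx : f x = g x by apply: (nbhs_singleton fg).
have hg : g \o shift x = cst (g x) + 'd f x +o_ 0 id.
  apply/eqaddoP => eps eps0.
  have /eqadd_some_oP := diff_locally df.
  move=> /(_ eps eps0).
  have : \forall h \near (0:V), f (h + x) = g (h + x).
    by rewrite (near_shift x) /=; near do rewrite /= sub0r subrK //.
  move=> fgh Hf; apply: filterS2 fgh Hf => h E.
  by rewrite /= -fgx !fctE /= E.
have du : 'd g x = 'd f x :> (V -> R).
  by apply: diff_unique => //; exact: diff_continuous.
apply/(diff_locallyP x g); rewrite du; split => //; exact: diff_continuous.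
Unshelve. all: by end_near. Qed.

End Gen.

Set Implicit Arguments. Unset Strict Implicit. Unset Printing Implicit Defensive.

Section DDs.
Context {R : realType} {V : normedModType R} (x e : V).

Definition DD (F : V -> R) (dF : R) := differentiable F x /\ 'D_e F x = dF.

Lemma DD_ext (F G : V -> R) a : (forall y, F y = G y) -> DD F a -> DD G a.
Proof. by move=> /funext ->. Qed.

Lemma DD_val F a b : a = b -> DD F a -> DD F b.
Proof. by move=> ->. Qed.

Lemma DD_cst c : DD (fun _ => c) 0.
Proof. split; [exact: differentiable_cst | exact: derive_cst]. Qed.

Lemma DD_add F G a b : DD F a -> DD G b -> DD (fun y => F y + G y) (a + b).
Proof.
move=> [dF <-] [dG <-]; split; first exact: differentiableD.
by rewrite (@deriveD _ _ _ F G) //; exact: diff_derivable.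
Qed.

Lemma DD_opp F a : DD F a -> DD (fun y => - F y) (- a).
Proof.
move=> [dF <-]; split; first exact: differentiableN.
by rewrite (@deriveN _ _ _ F) //; exact: diff_derivable.
Qed.

Lemma DD_sub F G a b : DD F a -> DD G b -> DD (fun y => F y - G y) (a - b).
Proof. move=> hF hG; exact: (DD_add hF (DD_opp hG)). Qed.

Lemma DD_mul F G a b : DD F a -> DD G b ->
  DD (fun y => F y * G y) (F x * b + a * G x).
Proof.
move=> [dF <-] [dG <-]; split; first exact: differentiableM.
rewrite (@deriveM _ _ F G) //; try exact: diff_derivable.
by rewrite [G x *: _]mulrC.
Qed.

Lemma DD_sum n (F : 'I_n -> V -> R) (a : 'I_n -> R) :
  (forall i, DD (F i) (a i)) -> DD (fun y => \sum_(i < n) F i y) (\sum_(i < n) a i).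
Proof.
elim: n F a => [|n IH] F a hF.
  have -> : (fun y => \sum_(i < 0) F i y) = (fun _ => 0).
    by apply/funext => y; rewrite big_ord0.
  rewrite big_ord0; exact: DD_cst.
have -> : (fun y => \sum_(i < n.+1) F i y) =
   (fun y => \sum_(i < n) F (widen_ord (leqnSn n) i) y + F ord_max y).
  by apply/funext => y; rewrite big_ord_recr.
rewrite big_ord_recr; apply: DD_add; last exact: hF.
by apply: IH => i; exact: hF.
Qed.

Lemma DD_mulc c F a : DD F a -> DD (fun y => c * F y) (c * a).
Proof.
move=> h; apply: DD_val (DD_mul (DD_cst c) h); by rewrite mul0r addr0.
Qed.

End DDs.

Section Frozen.
Variable R : realType.

Definition Smxz (m : nat) (a : R) (z : int) : 'M[R]_m :=
  \matrix_(k, l) ((1 - a) * (l == pidx k z)%:R + a * (l == pidx k (z + 1))%:R).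

Lemma Smx_z m s : Smx m s = Smxz m (alph s) (nfl s).
Proof. by []. Qed.

Lemma sum_ind m (p : 'I_m) (u : 'I_m -> R) :
  \sum_l (l == p)%:R * u l = u p.
Proof.
rewrite (bigD1 p) //= eqxx mul1r big1 ?addr0 // => l /negbTE ->.
by rewrite mul0r.
Qed.

Lemma Smxz_mul m a z (u : 'cV[R]_m) k :
  (Smxz m a z *m u) k 0 = (1 - a) * u (pidx k z) 0 + a * u (pidx k (z + 1)) 0.
Proof.
rewrite mxE.
under eq_bigr do rewrite mxE mulrDl -!mulrA.
rewrite big_split /= -!mulr_sumr.
by rewrite !(sum_ind _ (fun l => u l 0)).
Qed.

Variables (nx nv : nat) (dt dx dv w : R) (v : 'I_nv -> R) (C : 'M[R]_nx).
Variables (N : nat) (f0 feq : 'M[R]_(nx, nv)).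

Local Notation V := 'cV[R]_nx.
Local Notation Mat := 'M[R]_(nx, nv).
Local Notation xs := (xstep dt dx v).
Local Notation sg := (sigma dt dv w C).

Lemma xstepE (f : Mat) i j :
  xs f i j = \sum_l Smx nx (xshift dt dx v j) i l * f l j.
Proof. by rewrite [LHS]mxE [LHS]mxE; apply: eq_bigr => l _; rewrite [col _ _ _ _]mxE. Qed.

Lemma sigmaE (H : V) (fs : Mat) i :
  sg H fs i = ((\sum_k C i k * (1 - w * \sum_j fs k j)) + H i 0) * dt / dv.
Proof.
rewrite /sigma /Efield mxE; congr ((_ + _) * _ / _).
by apply: eq_bigr => k _; rewrite !mxE.
Qed.

Definition vstepz (zi : 'I_nx -> int) (H : V) (fs : Mat) : Mat :=
  \matrix_(i, j) ((1 - (sg H fs i - (zi i)%:~R)) * fs i (pidx j (zi i))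
                  + (sg H fs i - (zi i)%:~R) * fs i (pidx j (zi i + 1))).

Lemma vstep_z zi H fs : (forall i, nfl (sg H fs i) = zi i) ->
  vstep dt dv w C H fs = vstepz zi H fs.
Proof.
move=> hz; apply/matrixP => i j; rewrite [LHS]mxE Smx_z Smxz_mul /alph hz.
by rewrite !mxE.
Qed.

Variable z : nat -> 'I_nx -> int.

Fixpoint fnz (H : V) (n : nat) : Mat :=
  match n with
  | 0 => f0
  | n'.+1 => xs (vstepz (z n') H (xs (fnz H n')))
  end.

Lemma fn_z H n : (forall m i, (m < n)%N -> nfl (sig dt dx dv w v C f0 H m i) = z m i) ->
  fn dt dx dv w v C f0 H n = fnz H n.
Proof.
elim: n => [|n IH] hz //=.
rewrite /fn /= -/(fn dt dx dv w v C f0 H n) /fstep.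
rewrite (vstep_z (zi := z n)); last first.
  by move=> i; have := hz n i (ltnSn n); rewrite /sig /fstar.
by rewrite IH // => m i hm; apply: hz; apply: ltnW.
Qed.

End Frozen.

Section Tangent.
Variable R : realType.
Variables (nx nv : nat) (dt dx dv w : R) (v : 'I_nv -> R) (C : 'M[R]_nx).
Variables (N : nat) (f0 feq : 'M[R]_(nx, nv)).
Variable z : nat -> 'I_nx -> int.
Variables (H0 : 'cV[R]_nx) (i0 : 'I_nx).

Local Notation V := 'cV[R]_nx.
Local Notation Mat := 'M[R]_(nx, nv).
Local Notation xs := (xstep dt dx v).
Local Notation sg := (sigma dt dv w C).
Local Notation e := (delta_mx i0 0 : V).
Local Notation DDh := (DD H0 e).
Local Notation fz := (fnz dt dx dv w v C f0 z).
Local Notation vz := (vstepz dt dv w C).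

Lemma DD_coord k : DDh (fun y : V => y k 0) (e k 0).
Proof.
split; first exact: differentiable_coord.
have h := derive_mx (@derivable_id _ _ H0 e).
by rewrite derive_id in h; rewrite [in RHS]h mxE.
Qed.

Lemma DD_mulr c F a : DDh F a -> DDh (fun y => F y * c) (a * c).
Proof.
move=> h; apply: DD_val (DD_mul h (DD_cst H0 e c)); by rewrite mulr0 add0r.
Qed.

Lemma DD_xstep (F : V -> Mat) (dF : Mat) :
  (forall l j, DDh (fun y => F y l j) (dF l j)) ->
  forall i j, DDh (fun y => xs (F y) i j) (xs dF i j).
Proof.
move=> hF i j; rewrite xstepE.
apply: (@DD_ext _ _ _ _ (fun y => \sum_l Smx nx (xshift dt dx v j) i l * F y l j)).
  by move=> y; rewrite xstepE.
by apply: DD_sum => l; apply: DD_mulc.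
Qed.

Definition dsig (dfs : Mat) (i : 'I_nx) : R :=
  (\sum_k C i k * (0 - w * \sum_j dfs k j) + e i 0) * dt / dv.

Lemma DD_sigma (F : V -> Mat) (dF : Mat) :
  (forall k j, DDh (fun y => F y k j) (dF k j)) ->
  forall i, DDh (fun y => sg y (F y) i) (dsig dF i).
Proof.
move=> hF i.
apply: (@DD_ext _ _ _ _ (fun y => ((\sum_k C i k * (1 - w * \sum_j F y k j)) + y i 0) * dt / dv)).
  by move=> y; rewrite sigmaE.
apply: DD_mulr; apply: DD_mulr; apply: DD_add; last exact: DD_coord.
apply: DD_sum => k; apply: DD_mulc; apply: DD_sub; first exact: DD_cst.
by apply: DD_mulc; apply: DD_sum => j; exact: hF.
Qed.

Definition dvz (zi : 'I_nx -> int) (fs dfs : Mat) : Mat :=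
  \matrix_(i, j)
   (((1 - (sg H0 fs i - (zi i)%:~R)) * dfs i (pidx j (zi i))
       + (0 - (dsig dfs i - 0)) * fs i (pidx j (zi i)))
    + ((sg H0 fs i - (zi i)%:~R) * dfs i (pidx j (zi i + 1))
       + (dsig dfs i - 0) * fs i (pidx j (zi i + 1)))).

Lemma DD_vstepz zi (F : V -> Mat) (dF : Mat) :
  (forall k j, DDh (fun y => F y k j) (dF k j)) ->
  forall i j, DDh (fun y => vz zi y (F y) i j) (dvz zi (F H0) dF i j).
Proof.
move=> hF i j; rewrite mxE.
apply: (@DD_ext _ _ _ _ (fun y =>
   (1 - (sg y (F y) i - (zi i)%:~R)) * F y i (pidx j (zi i))
   + (sg y (F y) i - (zi i)%:~R) * F y i (pidx j (zi i + 1)))).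
  by move=> y; rewrite mxE.
apply: DD_add; apply: DD_mul => //.
  apply: DD_sub; first exact: DD_cst.
  by apply: DD_sub; [exact: DD_sigma | exact: DD_cst].
by apply: DD_sub; [exact: DD_sigma | exact: DD_cst].
Qed.

Fixpoint df (n : nat) : Mat :=
  match n with
  | 0 => 0
  | n'.+1 => xs (dvz (z n') (xs (fz H0 n')) (xs (df n')))
  end.

Lemma DD_fnz n k j : DDh (fun y => fz y n k j) (df n k j).
Proof.
elim: n k j => [|n IH] k j /=.
  by rewrite mxE; exact: DD_cst.
apply: DD_xstep => l j'.
apply: DD_vstepz => k' j''.
by apply: DD_xstep => l' j3; exact: IH.
Qed.

Definition Jz (y : V) : R :=
  dx * dv / 2 * \sum_i \sum_j (fz y N i j - feq i j) ^+ 2.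

Lemma DD_Jz : DDh Jz (dx * dv * \sum_i \sum_j (fz H0 N i j - feq i j) * df N i j).
Proof.
have h : DDh Jz (dx * dv / 2 * \sum_i \sum_j ((fz H0 N i j - feq i j) * (df N i j - 0)
     + (df N i j - 0) * (fz H0 N i j - feq i j))).
  apply: DD_mulc; apply: DD_sum => i; apply: DD_sum => j.
  apply: (@DD_ext _ _ _ _ (fun y => (fz y N i j - feq i j) * (fz y N i j - feq i j))).
    by move=> y; rewrite expr2.
  by apply: DD_mul; (apply: DD_sub; [exact: DD_fnz | exact: DD_cst]).
apply: DD_val h.
rewrite [in RHS]mulr_sumr [in LHS]mulr_sumr; apply: eq_bigr => i _.
rewrite [in RHS]mulr_sumr [in LHS]mulr_sumr; apply: eq_bigr => j _.
by rewrite subr0; field.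
Qed.

End Tangent.

Section Adjoint.
Variable R : realType.

Definition ip m n (A B : 'M[R]_(m, n)) : R := \sum_i \sum_j A i j * B i j.

Lemma adj_mul m (S : 'M[R]_m) (g u : 'I_m -> R) :
  \sum_l g l * (\sum_k S l k * u k) = \sum_k (\sum_l S l k * g l) * u k.
Proof.
under eq_bigr do rewrite mulr_sumr.
rewrite exchange_big /=; apply: eq_bigr => k _.
rewrite mulr_suml; apply: eq_bigr => l _; ring.
Qed.

Variables (nx nv : nat) (dt dx dv w : R) (v : 'I_nv -> R) (C : 'M[R]_nx).

Local Notation Mat := 'M[R]_(nx, nv).
Local Notation xs := (xstep dt dx v).
Local Notation xsT := (xstepT dt dx v).

Lemma ip_xstep (g f : Mat) : ip g (xs f) = ip (xsT g) f.
Proof.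
rewrite /ip exchange_big [RHS]exchange_big /=; apply: eq_bigr => j _.
have -> : \sum_i g i j * xs f i j =
          \sum_i g i j * (\sum_l Smx nx (xshift dt dx v j) i l * f l j).
  by apply: eq_bigr => i _; rewrite xstepE.
rewrite adj_mul; apply: eq_bigr => l _; congr (_ * _).
by rewrite !mxE; apply: eq_bigr => k _; rewrite !mxE.
Qed.

Variables (N : nat) (f0 feq : Mat) (H0 : 'cV[R]_nx) (i0 : 'I_nx).
Local Notation e := (delta_mx i0 0 : 'cV[R]_nx).
Local Notation fst := (fstar dt dx dv w v C f0 H0).
Local Notation sg := (sig dt dx dv w v C f0 H0).
Local Notation dvecH := (dvec dt dx dv w v C f0 H0).

Definition zz (n : nat) (i : 'I_nx) : int := nfl (sg n i).

Lemma dvecE n (g1 : Mat) k : dvecH n g1 k 0 =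
  dt / dv * \sum_l (fst n k (pidx l (zz n k + 1)) - fst n k (pidx l (zz n k))) * xsT g1 k l.
Proof.
rewrite mxE mulr_sumr; apply: eq_bigr => l _; rewrite mxE; ring.
Qed.

Lemma dvz_E n (dfs : Mat) k l :
  dvz dt dv w C H0 i0 (zz n) (fst n) dfs k l =
  (Smx nv (sg n k) *m (row k dfs)^T) l 0
  + dsig dt dv w C i0 dfs k * (fst n k (pidx l (zz n k + 1)) - fst n k (pidx l (zz n k))).
Proof.
rewrite mxE Smx_z Smxz_mul !mxE /alph /zz; rewrite /sig; ring.
Qed.

Lemma partB n (g1 dfs : Mat) :
  \sum_k \sum_l xsT g1 k l * (dsig dt dv w C i0 dfs k *
      (fst n k (pidx l (zz n k + 1)) - fst n k (pidx l (zz n k))))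
  = \sum_k \sum_l (- (w * (C^T *m dvecH n g1) k 0)) * dfs k l + dvecH n g1 i0 0.
Proof.
have step1 : forall k, \sum_l xsT g1 k l * (dsig dt dv w C i0 dfs k *
      (fst n k (pidx l (zz n k + 1)) - fst n k (pidx l (zz n k))))
    = ((\sum_m C k m * (0 - w * \sum_j dfs m j)) + e k 0) * dvecH n g1 k 0.
  move=> k; rewrite dvecE.
  set S := \sum_l _ * xsT g1 k l.
  have -> : \sum_l xsT g1 k l * (dsig dt dv w C i0 dfs k *
      (fst n k (pidx l (zz n k + 1)) - fst n k (pidx l (zz n k))))
     = dsig dt dv w C i0 dfs k * S.
    by rewrite /S mulr_sumr; apply: eq_bigr => l _; ring.
  rewrite /dsig; ring.
under eq_bigr do rewrite step1 mulrDl.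
rewrite big_split /=; congr (_ + _).
- have -> : \sum_k (\sum_m C k m * (0 - w * \sum_j dfs m j)) * dvecH n g1 k 0
     = \sum_m (0 - w * \sum_j dfs m j) * (C^T *m dvecH n g1) m 0.
    under eq_bigr do rewrite mulr_suml.
    rewrite exchange_big /=; apply: eq_bigr => m _.
    rewrite [(C^T *m _) m 0]mxE; set a := (0 - w * _); rewrite mulr_sumr; apply: eq_bigr => k _; rewrite [C^T m k]mxE; ring.
  apply: eq_bigr => m _.
  by rewrite -mulr_sumr; ring.
- under eq_bigr do rewrite mxE andbT.
  exact: sum_ind.
Qed.

Lemma mulT_E m (S : 'M[R]_m) (M : Mat) (k : 'I_nx) (l : 'I_m) :
  m = nv -> True.
Proof. by []. Qed.

Lemma key n (g1 dfs : Mat) :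
  ip (xsT g1) (dvz dt dv w C H0 i0 (zz n) (fst n) dfs) =
  ip (\matrix_(k, l) (((Smx nv (sg n k))^T *m (row k (xsT g1))^T) l 0
                     - w * (C^T *m dvecH n g1) k 0)) dfs + dvecH n g1 i0 0.
Proof.
rewrite /ip.
have -> : \sum_k \sum_l xsT g1 k l * dvz dt dv w C H0 i0 (zz n) (fst n) dfs k l =
  \sum_k \sum_l xsT g1 k l * (Smx nv (sg n k) *m (row k dfs)^T) l 0 +
  \sum_k \sum_l xsT g1 k l * (dsig dt dv w C i0 dfs k *
      (fst n k (pidx l (zz n k + 1)) - fst n k (pidx l (zz n k)))).
  rewrite -big_split; apply: eq_bigr => k _; rewrite -big_split; apply: eq_bigr => l _.
  by rewrite dvz_E mulrDr.
have -> : \sum_k \sum_l (\matrix_(k, l) (((Smx nv (sg n k))^T *m (row k (xsT g1))^T) l 0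
                     - w * (C^T *m dvecH n g1) k 0)) k l * dfs k l =
  \sum_k \sum_l ((Smx nv (sg n k))^T *m (row k (xsT g1))^T) l 0 * dfs k l +
  \sum_k \sum_l (- (w * (C^T *m dvecH n g1) k 0)) * dfs k l.
  rewrite -big_split; apply: eq_bigr => k _; rewrite -big_split; apply: eq_bigr => l _.
  by rewrite mxE mulrDl.
rewrite partB addrA; congr (_ + _ + _); apply: eq_bigr => k _.
have -> : \sum_l xsT g1 k l * (Smx nv (sg n k) *m (row k dfs)^T) l 0 =
          \sum_l xsT g1 k l * (\sum_m Smx nv (sg n k) l m * dfs k m).
  apply: eq_bigr => l _; congr (_ * _); rewrite mxE; apply: eq_bigr => m _.
  by rewrite [(row _ _)^T _ _]mxE [row _ _ _ _]mxE.
rewrite (adj_mul _ (fun l => xsT g1 k l) (fun m => dfs k m)).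
apply: eq_bigr => m _; congr (_ * _); rewrite mxE; apply: eq_bigr => l _.
by rewrite [(row _ _)^T _ _]mxE [row _ _ _ _]mxE [_^T m l]mxE.
Qed.

Local Notation dfz := (df dt dx dv w v C f0 zz H0 i0).
Local Notation gad := (gadj dt dx dv w v C N f0 feq H0).

Lemma fz_fn n : fnz dt dx dv w v C f0 zz H0 n = fn dt dx dv w v C f0 H0 n.
Proof. rewrite (@fn_z _ _ _ _ _ _ _ _ _ _ zz) //. Qed.

Lemma step n (g1 : Mat) :
  ip g1 (dfz n.+1) = dvecH n g1 i0 0 + ip (gstep dt dx dv w v C f0 H0 n g1) (dfz n).
Proof.
have -> : dfz n.+1 = xs (dvz dt dv w C H0 i0 (zz n) (fst n) (xs (dfz n))).
  by rewrite [dfz n.+1]/df -/df fz_fn.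
by rewrite ip_xstep key ip_xstep addrC.
Qed.

Lemma grecS m : grec dt dx dv w v C N f0 feq H0 m.+1 =
  gstep dt dx dv w v C f0 H0 (N - m.+1) (grec dt dx dv w v C N f0 feq H0 m).
Proof. by []. Qed.

Lemma gadjS k : (k < N)%N -> gad k = gstep dt dx dv w v C f0 H0 k (gad k.+1).
Proof.
move=> kN; rewrite /gadj.
have -> : (N - k = (N - k.+1).+1)%N by lia.
rewrite grecS.
have -> : (N - (N - k.+1).+1 = k)%N by lia.
by [].
Qed.

Lemma adjoint_sum k : (k <= N)%N ->
  ip (gad k) (dfz k) = \sum_(n < k) dn dt dx dv w v C N f0 feq H0 n i0 0.
Proof.
elim: k => [_|k IH kN].
  rewrite big_ord0 /ip big1 // => i _; rewrite big1 // => j _.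
  by rewrite [dfz 0]/df mxE mulr0.
rewrite big_ord_recr step -IH; last exact: ltnW.
by rewrite (gadjS kN) addrC.
Qed.

End Adjoint.

Unset Implicit Arguments. Set Strict Implicit.

Section Final.
Variables (R : realType) (nx nv N : nat) (dt dx dv w : R)
  (v : 'I_nv -> R) (C : 'M[R]_nx) (f0 feq : 'M[R]_(nx, nv)) (H : 'cV[R]_nx).
Hypothesis hint : forall (n : nat) (i : 'I_nx), (n < N)%N ->
      ~ exists z : int, sig dt dx dv w v C f0 H n i = z%:~R.

Local Notation z := (zz dt dx dv w v C f0 H).
Local Notation fz := (fnz dt dx dv w v C f0 z).

Lemma near_floor n : (n <= N)%N ->
  \forall y \near H, forall m i, (m < n)%N -> nfl (sig dt dx dv w v C f0 y m i) = z m i.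
Proof.
elim: n => [_|n IH nN].
  by apply: filterE => y m i.
have IH' := IH (ltnW nN).
have hn : forall i, \forall y \near H, nfl (sig dt dx dv w v C f0 y n i) = z n i.
  move=> i.
  pose sz := fun y => sigma dt dv w C y (xstep dt dx v (fz y n)) i.
  have dsz : differentiable sz H.
    have := @DD_sigma _ _ _ dt dv w C H i (fun y => xstep dt dx v (fz y n)) _
      (DD_xstep dt dx v (fun l j => DD_fnz dt dx dv w v C f0 z H i n l j)) i.
    by case.
  have csz := differentiable_continuous dsz.
  have szH : sz H = sig dt dx dv w v C f0 H n i.
    by rewrite /sz fz_fn.
  have fl := floor_itv (sz H).
  have hlt : (z n i)%:~R < sz H.
    rewrite lt_neqAle szH floor_le andbT; apply/negP => /eqP h.
    by apply: (hint n i nN); exists (z n i); rewrite -szH h.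
  have hup : sz H < (z n i + 1)%:~R by rewrite /z -szH floorD1_gt.
  have n1 := cvgr_gt (sz H) csz _ hlt.
  have n2 := cvgr_lt (sz H) csz _ hup.
  near=> y.
  have h1 : (z n i)%:~R < sz y by near: y; exact: n1.
  have h2 : sz y < (z n i + 1)%:~R by near: y; exact: n2.
  have h3 : forall m i, (m < n)%N -> nfl (sig dt dx dv w v C f0 y m i) = z m i by near: y; exact: IH'.
  have -> : sig dt dx dv w v C f0 y n i = sz y.
    by rewrite /sz -fn_z.
  by apply: floor_def; rewrite h2 andbT ltW.
have hall := filter_forall _ hn.
near=> y => m i hm.
have h3 : forall m i, (m < n)%N -> nfl (sig dt dx dv w v C f0 y m i) = z m i by near: y; exact: IH'.
have h4 : forall i, nfl (sig dt dx dv w v C f0 y n i) = z n i by near: y; exact: hall.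
rewrite ltnS leq_eqVlt in hm; case/orP: hm => [/eqP -> | hm]; first exact: h4.
exact: h3.
Unshelve. all: by end_near. Qed.

Local Notation J := (Jcost dt dx dv w v C N f0 feq).
Local Notation Jzz := (Jz dt dx dv w v C N f0 feq z).

Lemma J_near : \forall y \near H, Jzz y = J y.
Proof.
have hN := @near_floor N (leqnn N).
near=> y.
have hy : forall m i, (m < N)%N -> nfl (sig dt dx dv w v C f0 y m i) = z m i.
  by near: y; exact: hN.
by rewrite /Jz /Jcost (fn_z hy).
Unshelve. all: by end_near. Qed.

Lemma main_result (Hnx : (0 < nx)%N) :
  differentiable J H /\
  forall i : 'I_nx,
    'D_(delta_mx i 0) J H = dx * dv * \sum_(n < N) dn dt dx dv w v C N f0 feq H n i 0.
Proof.
split.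
  apply: (near_eq_differentiable Jzz J H J_near).
  by case: (DD_Jz dt dx dv w v C N f0 feq z H (Ordinal Hnx)).
move=> i.
rewrite -(near_eq_derive _ J_near).
case: (DD_Jz dt dx dv w v C N f0 feq z H i) => _ ->.
rewrite -(adjoint_sum dt dx dv w v C f0 feq H i (leqnn N)).
congr (_ * _); rewrite /ip; apply: eq_bigr => k _; apply: eq_bigr => l _.
rewrite fz_fn /gadj subnn /= mxE.
by rewrite mxE.
Qed.

End Final.

Theorem mainTheorem3 (R : realType) (nx nv N : nat)
  (Hnx : (0 < nx)%N) (Hnv : (0 < nv)%N) (HN : (0 < N)%N)
  (dt dx dv w : R) (Hdt : 0 < dt) (Hdx : 0 < dx) (Hdv : 0 < dv) (Hw : 0 < w)
  (v : 'I_nv -> R) (C : 'M[R]_nx) (f0 feq : 'M[R]_(nx, nv)) (H : 'cV[R]_nx) :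
  (forall (n : nat) (i : 'I_nx), (n < N)%N ->
      ~ exists z : int, sig dt dx dv w v C f0 H n i = z%:~R) ->
  differentiable (Jcost dt dx dv w v C N f0 feq) H /\
  forall i : 'I_nx,
    'D_(delta_mx i 0) (Jcost dt dx dv w v C N f0 feq) H
    = dx * dv * \sum_(n < N) dn dt dx dv w v C N f0 feq H n i 0.
Proof.
move=> hint; exact: (@main_result R nx nv N dt dx dv w v C f0 feq H hint Hnx).
Qed.
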